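(* Let $N\in\mathbb{N}$ and $m,m'\in\mathrm{Ran}[m_N]$. Then \[ w_1(\mu_{\mathrm{MC}}^{m;N},\mu_{\mathrm{MC}}^{m';N};N)=|m'-m|. \]
   Context: $\Lambda$ is a finite lattice with $N=|\Lambda|$ sites (identified with $[N]$), $\mathcal{S}=\{-1,1\}^\Lambda\subset\mathbb{R}^N$, $M[\phi]=\sum_{x}\phi(x)$, $m_N=M/N$, $\mathrm{Ran}[m_N]$ its range. For $m\in\mathrm{Ran}[m_N]$, $\mu_{\mathrm{MC}}^{m;N}$ is the uniform probability measure on $\mathcal{S}_m=\{\phi\in\mathcal{S}:m_N[\phi]=m\}$. The specific $1$-norm fluctuation distance is $w_1(\mu_1,\mu_2;N)=\inf_\gamma\int\gamma(d\phi,d\phi')\frac1N\sum_{x}|\phi(x)-\phi'(x)|$, the infimum over all couplings of $\mu_1,\mu_2$. *)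

(* Defs.v *)
From HB Require Import structures.
From mathcomp Require Import all_boot all_order all_algebra.
From mathcomp Require Import classical_sets reals.
Set Implicit Arguments. Unset Strict Implicit. Unset Printing Implicit Defensive.
Import Order.TTheory GRing.Theory Num.Theory.
Local Open Scope ring_scope.
Local Open Scope classical_set_scope.

(* Lattice Lambda identified with 'I_N.  A spin configuration phi : Lambda -> {-1,1}
   is encoded as a finite function into bool; [spin b] is its value in R. *)
Definition config (N : nat) := {ffun 'I_N -> bool}.

Definition spin {R : realType} (b : bool) : R := if b then 1 else -1.

Definition magn {R : realType} {N : nat} (phi : config N) : R :=
  \sum_(x : 'I_N) spin (phi x).

Definition mN {R : realType} {N : nat} (phi : config N) : R := magn phi / N%:R.

Definition Ran_mN {R : realType} (N : nat) : set R :=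
  [set m | exists phi : config N, mN phi = m].

Definition muMC {R : realType} (N : nat) (m : R) (phi : config N) : R :=
  if mN phi == m then (#|[set psi : config N | mN psi == m]|%:R)^-1 else 0.

Definition is_coupling {R : realType} {N : nat}
    (mu1 mu2 : config N -> R) (gamma : config N -> config N -> R) : Prop :=
  (forall phi phi', 0 <= gamma phi phi') /\
  (forall phi, \sum_(phi' : config N) gamma phi phi' = mu1 phi) /\
  (forall phi', \sum_(phi : config N) gamma phi phi' = mu2 phi').

Definition dist1 {R : realType} {N : nat} (phi phi' : config N) : R :=
  N%:R^-1 * \sum_(x : 'I_N) `|spin (phi x) - spin (phi' x)|.

Definition coupling_cost {R : realType} {N : nat}
    (gamma : config N -> config N -> R) : R :=
  \sum_(phi : config N) \sum_(phi' : config N) gamma phi phi' * dist1 phi phi'.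

Definition w1 {R : realType} {N : nat} (mu1 mu2 : config N -> R) : R :=
  inf [set c : R | exists gamma, is_coupling mu1 mu2 gamma /\ c = coupling_cost gamma].

(* Main.v *)
Require Import Defs.
From HB Require Import structures.
From mathcomp Require Import all_boot all_order all_algebra.
From mathcomp Require Import classical_sets reals.
From mathcomp Require Import zify ring lra.
Import Order.TTheory GRing.Theory Num.Theory.
Local Open Scope ring_scope.


Definition toS {N : nat} (phi : config N) : {set 'I_N} := [set x | phi x].
Definition ofS {N : nat} (A : {set 'I_N}) : config N := [ffun x => x \in A].
Definition ones {N : nat} (phi : config N) : nat := #|toS phi|.
Definition lec {N : nat} (phi psi : config N) : bool := toS phi \subset toS psi.

Lemma toSK N : cancel (@toS N) ofS.
Proof. by move=> phi; apply/ffunP=> x; rewrite ffunE inE. Qed.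
Lemma ofSK N : cancel (@ofS N) toS.
Proof. by move=> A; apply/setP=> x; rewrite inE ffunE. Qed.

Lemma card_transfer N (Q : {set 'I_N} -> bool) :
  #|[set psi : config N | Q (toS psi)]| = #|[set A : {set 'I_N} | Q A]|.
Proof.
rewrite -(on_card_preimset (f := @toS N)); last first.
  by apply: onW_bij; exists ofS; [apply: toSK | apply: ofSK].
by apply: eq_card => psi; rewrite !inE.
Qed.

Lemma ones_le N (phi : config N) : (ones phi <= N)%N.
Proof. by have := cardsC (toS phi); rewrite card_ord /ones; lia. Qed.

Lemma C0 N k : #|[set psi : config N | ones psi == k]| = 'C(N, k).
Proof. by rewrite (@card_transfer _ (fun A => #|A| == k)) card_draws card_ord. Qed.

Lemma C2 N (phi' : config N) k :
  #|[set psi : config N | lec psi phi' && (ones psi == k)]| = 'C(ones phi', k).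
Proof. by rewrite (@card_transfer _ (fun A => (A \subset toS phi') && (#|A| == k))) cards_draws. Qed.

Lemma C1 N (phi : config N) k' : (ones phi <= k')%N -> (k' <= N)%N ->
  #|[set psi : config N | lec phi psi && (ones psi == k')]| = 'C(N - ones phi, N - k').
Proof.
move=> h1 h2.
rewrite (@card_transfer _ (fun A => (toS phi \subset A) && (#|A| == k'))).
have -> : 'C(N - ones phi, N - k') = #|[set C : {set 'I_N} | C \subset ~: toS phi & #|C| == (N - k')%N]|.
  by rewrite cards_draws; congr 'C(_,_); have := cardsC (toS phi); rewrite card_ord /ones; lia.
rewrite -(card_preimset _ (@finset.setC_inj _)); apply: eq_card => B; rewrite !inE finset.subsetC.
case: (B \subset ~: toS phi) => //=.
have := cardsC B; rewrite card_ord => hB.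
move: hB; set a := #|B|; set b := #|~: B| => hB. apply/eqP/eqP => ?; lia.
Qed.

Lemma binid N k k' : (k <= k')%N -> (k' <= N)%N ->
  ('C(N,k) * 'C(N-k, N-k') = 'C(N,k') * 'C(k',k))%N.
Proof.
move=> h1 h2.
have H1 := bin_fact (_ : (k <= N)%N) ; have H2 := @bin_fact (N-k) (N-k').
have H3 := bin_fact h1; have H4 := bin_fact h2.
have e : (N - k - (N - k') = k' - k)%N by lia.
rewrite e in H2.
have F : (0 < k`! * (k'-k)`! * (N-k')`!)%N by rewrite !muln_gt0 !fact_gt0.
apply/eqP; rewrite -(eqn_pmul2r F); apply/eqP.
transitivity ('C(N,k) * (k`! * ('C(N-k,N-k') * ((N-k')`! * (k'-k)`!))))%N; first by ring.
rewrite H2 ?(leq_trans h1 h2) //; last by lia.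
transitivity ('C(N,k') * ((N-k')`! * ('C(k',k) * (k`! * (k'-k)`!))))%N; last by ring.
rewrite H3 H1 ?(leq_trans h1 h2) //. rewrite -H4. ring.
Qed.

Local Open Scope classical_set_scope.

Lemma magn_ones (R : realType) N (phi : config N) :
  magn phi = 2 * (ones phi)%:R - N%:R :> R.
Proof.
rewrite /magn.
have -> : \sum_(x : 'I_N) spin (phi x) = \sum_(x : 'I_N) (2 * (if x \in toS phi then 1 else 0) - 1) :> R.
  by apply: eq_bigr => x _; rewrite inE /spin; case: (phi x) => /=; lra.
by rewrite sumrB -mulr_sumr -big_mkcond /= !sumr_const card_ord /ones.
Qed.

Lemma mN_eq (R : realType) N (phi psi : config N) :
  (mN phi == mN psi :> R) = (ones phi == ones psi).
Proof.
rewrite /mN !magn_ones.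
case: N phi psi => [|n] phi psi.
  have h1 := ones_le _ phi; have h2 := ones_le _ psi.
  by rewrite !invr0 !mulr0 eqxx; apply/esym/eqP; lia.
have hn : (n.+1)%:R != 0 :> R by rewrite pnatr_eq0.
apply/eqP/eqP => [h|->//].
have two : 2 != 0 :> R by rewrite pnatr_eq0.
have := mulIf (invr_neq0 hn) h => /addIr /(mulfI two).
by move=> /eqP; rewrite eqr_nat => /eqP.
Qed.

Lemma spin_mono (R : realType) (a b : bool) : a ==> b -> `|spin a - spin b| = spin b - spin a :> R.
Proof. case: a; case: b => //= _; rewrite /spin ?subrr ?normr0 //. rewrite ler0_norm; lra. Qed.

Lemma dist_mono (R : realType) N (phi psi : config N) :
  lec phi psi -> dist1 phi psi = mN psi - mN phi :> R.
Proof.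
move=> /fintype.subsetP h.
rewrite /dist1 /mN /magn.
have -> : \sum_(x : 'I_N) `|spin (phi x) - spin (psi x)| = \sum_(x : 'I_N) (spin (psi x) - spin (phi x)) :> R.
  apply: eq_bigr => x _; apply: spin_mono; have := h x; rewrite !inE.
  by case: (phi x); case: (psi x) => //= ->.
by rewrite sumrB; ring.
Qed.

Lemma dist_lb (R : realType) N (phi psi : config N) :
  `|mN psi - mN phi| <= dist1 phi psi :> R.
Proof.
rewrite /dist1 /mN /magn -mulrBl normrM mulrC [`|_^-1|]ger0_norm ?invr_ge0 ?ler0n //.
apply: ler_wpM2l; first by rewrite invr_ge0 ler0n.
rewrite -sumrB; apply: le_trans (ler_norm_sum _ _ _) _.
by apply: ler_sum => x _; rewrite distrC.
Qed.

Lemma cardS (R : realType) N (phi0 : config N) :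
  #|[set psi : config N | mN psi == mN phi0 :> R]| = 'C(N, ones phi0).
Proof.
rewrite -C0; apply: eq_card => psi; rewrite [RHS]inE -(mN_eq R).
by apply/idP/idP => [/set_mem //|h]; apply: mem_set.
Qed.

Lemma sum_muMC (R : realType) N (phi0 : config N) :
  \sum_(phi : config N) muMC (mN phi0) phi = 1 :> R.
Proof.
rewrite /muMC -big_mkcond /=.
rewrite (cardS R) -(C0 _ (ones phi0)) (eq_bigl (fun phi => phi \in [set psi : config N | ones psi == ones phi0]%SET)); last first.
  by move=> phi; rewrite inE mN_eq.
rewrite sumr_const -[_^-1 *+ _]mulr_natr mulVf // pnatr_eq0 -lt0n card_gt0.
by apply/set0Pn; exists phi0; rewrite inE.
Qed.

Local Close Scope classical_set_scope.

Set Implicit Arguments. Unset Strict Implicit.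

Lemma supp (R : realType) N (m m' : R) (gamma : config N -> config N -> R) :
  is_coupling (@muMC R N m) (@muMC R N m') gamma -> forall phi phi',
  gamma phi phi' != 0 -> mN phi = m /\ mN phi' = m'.
Proof.
case=> [h0 [hr hc]] phi phi' hne; split.
  apply/eqP; apply: contraNT hne => hm; apply/eqP.
  have := hr phi; rewrite /muMC (negbTE hm) => /psumr_eq0P; apply => //.
apply/eqP; apply: contraNT hne => hm; apply/eqP.
have := hc phi'; rewrite /muMC (negbTE hm) => /psumr_eq0P; apply => //.
Qed.

Lemma total (R : realType) N (phi0 : config N) (m' : R) gamma :
  is_coupling (@muMC R N (mN phi0)) (@muMC R N m') gamma ->
  \sum_phi \sum_phi' gamma phi phi' = 1.
Proof.
case=> [h0 [hr hc]]; under eq_bigr do rewrite hr.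
exact: sum_muMC.
Qed.

Lemma cost_const (R : realType) N (phi0 : config N) (m' c : R) gamma :
  is_coupling (@muMC R N (mN phi0)) (@muMC R N m') gamma ->
  (forall phi phi', gamma phi phi' * dist1 phi phi' = gamma phi phi' * c) ->
  coupling_cost gamma = c.
Proof.
move=> hc h; rewrite /coupling_cost -[RHS]mul1r -(total hc) mulr_suml.
apply: eq_bigr => phi _; rewrite mulr_suml; apply: eq_bigr => phi' _; exact: h.
Qed.

Lemma cost_lb (R : realType) N (phi0 : config N) (m' : R) gamma :
  is_coupling (@muMC R N (mN phi0)) (@muMC R N m') gamma ->
  `|m' - mN phi0| <= coupling_cost gamma.
Proof.
move=> hc; rewrite /coupling_cost -[X in X <= _]mul1r -(total hc) mulr_suml.
apply: ler_sum => phi _; rewrite mulr_suml; apply: ler_sum => phi' _.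
have [->|hne] := eqVneq (gamma phi phi') 0; first by rewrite !mul0r.
have [e1 e2] := supp hc hne.
apply: ler_wpM2l; first by case: hc => h0 _; apply: h0.
by rewrite -e1 -e2; apply: dist_lb.
Qed.

Set Implicit Arguments. Unset Strict Implicit.

Lemma construct (R : realType) N (phi0 phi1 : config N) :
  (ones phi0 <= ones phi1)%N ->
  exists gamma, is_coupling (@muMC R N (mN phi0)) (@muMC R N (mN phi1)) gamma /\
    (forall phi phi', gamma phi phi' != 0 -> lec phi phi').
Proof.
move=> hk; set k := ones phi0; set k' := ones phi1.
have hk' : (k' <= N)%N by apply: ones_le.
set c : R := (('C(N,k) * 'C(N-k, N-k'))%N%:R)^-1.
exists (fun phi phi' => if lec phi phi' && (ones phi == k) && (ones phi' == k') then c else 0).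
split; last by move=> phi phi'; case: ifP => [/andP[/andP[]]|] //; rewrite eqxx.
split; first by move=> phi phi'; case: ifP => // _; rewrite /c invr_ge0 ler0n.
split.
- move=> phi; rewrite /muMC (cardS R) (mN_eq R).
  have [e|ne] := eqVneq (ones phi) k; last first.
    by rewrite big1 // => phi' _; rewrite andbF.
  rewrite -big_mkcond /=.
  rewrite (eq_bigl (fun psi => psi \in [set psi : config N | lec phi psi && (ones psi == k')]%SET)); last first.
    by move=> psi; rewrite inE andbT.
  rewrite sumr_const C1 ?e // -[_^-1 *+ _]mulr_natr /c natrM invfM mulfVK //.
  by rewrite pnatr_eq0 -lt0n bin_gt0; lia.
- move=> phi'; rewrite /muMC (cardS R) (mN_eq R).
  have [e|ne] := eqVneq (ones phi') k'; last first.
    by rewrite big1 // => phi _; rewrite andbF.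
  rewrite -big_mkcond /=.
  rewrite (eq_bigl (fun psi => psi \in [set psi : config N | lec psi phi' && (ones psi == k)]%SET)); last first.
    by move=> psi; rewrite inE andbT.
  rewrite sumr_const C2 e -[_^-1 *+ _]mulr_natr /c binid // natrM invfM mulfVK //.
  by rewrite pnatr_eq0 -lt0n bin_gt0.
Qed.


Lemma dist1C (R : realType) N (phi psi : config N) : dist1 phi psi = dist1 psi phi :> R.
Proof. by rewrite /dist1; congr (_ * _); apply: eq_bigr => x _; rewrite distrC. Qed.

Theorem theorem3p7 (R : realType) (N : nat) (m m' : R) :
  @Ran_mN R N m -> @Ran_mN R N m' ->
  w1 (@muMC R N m) (@muMC R N m') = `|m' - m|.
Proof.
move=> [phi0 <-] [phi1 <-].
set S := [set c : R | exists gamma, is_coupling (@muMC R N (mN phi0)) (@muMC R N (mN phi1)) gamma /\ c = coupling_cost gamma]%classic.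
have lb : lbound S `|mN phi1 - mN phi0|.
  by move=> c [g [hg ->]]; apply: cost_lb.
have [g [hg hle]] : exists g, is_coupling (@muMC R N (mN phi0)) (@muMC R N (mN phi1)) g /\
    coupling_cost g <= `|mN phi1 - mN phi0|.
  case: (leqP (ones phi0) (ones phi1)) => h.
    have [g [hg hs]] := construct R h; exists g; split => //.
    rewrite (cost_const (c := mN phi1 - mN phi0) hg); first exact: ler_norm.
    move=> phi phi'; have [->|hne] := eqVneq (g phi phi') 0; first by rewrite !mul0r.
    have [e1 e2] := supp hg hne.
    by rewrite dist_mono ?e1 ?e2 //; apply: hs.
  have [g [hg hs]] := construct R (ltnW h).
  exists (fun phi phi' => g phi' phi).
  have hg' : is_coupling (@muMC R N (mN phi0)) (@muMC R N (mN phi1)) (fun phi phi' => g phi' phi).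
    by case: hg => [h0 [hr hc]]; split => // ; split.
  split => //.
  rewrite (cost_const (c := mN phi0 - mN phi1) hg'); first by rewrite distrC; exact: ler_norm.
  move=> phi phi'; have [->|hne] := eqVneq (g phi' phi) 0; first by rewrite !mul0r.
  have [e1 e2] := supp hg hne.
  by rewrite dist1C dist_mono ?e1 ?e2 //; apply: hs.
have hS : S (coupling_cost g) by exists g.
have eq : coupling_cost g = `|mN phi1 - mN phi0| by apply: le_anti; rewrite hle lb.
rewrite /w1 -/S; apply: le_anti; apply/andP; split.
  by rewrite -eq; apply: ge_inf => //; exists `|mN phi1 - mN phi0|.
by apply: lb_le_inf => //; exists (coupling_cost g).
Qed.
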